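(* Let $q\ge1$, let $a_k,b_k$ be real with $b_k>a_k>0$ for $k=1,\dots,q$, and let $\sigma\ge1$. Then for all $x>-1$, $x\neq 0$, $$ \frac{1}{\left(1+x\prod_{i=1}^q (a_i/b_i)\right)^{\sigma}}<{}_{q+1}F_q(\sigma,a_1,\dots,a_q;b_1,\dots,b_q;-x). $$
   Context: ${}_{q+1}F_q(\alpha_1,\dots,\alpha_{q+1};\beta_1,\dots,\beta_q;z)=\sum_{n\ge0}\frac{(\alpha_1)_n\cdots(\alpha_{q+1})_n}{(\beta_1)_n\cdots(\beta_q)_n n!}z^n$ with $(a)_n=a(a+1)\cdots(a+n-1)$, analytically continued to $\mathbb C\setminus[1,\infty)$. (At $x=0$ both sides equal $1$.) *)

(* Defs.v *)
From Stdlib Require Import Reals.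
From Coquelicot Require Import Coquelicot.
Open Scope R_scope.

Fixpoint poch (a : R) (n : nat) : R :=
  match n with
  | O => 1
  | S m => poch a m * (a + INR m)
  end.

Fixpoint prodR (q : nat) (f : nat -> R) : R :=
  match q with
  | O => 1
  | S m => prodR m f * f m
  end.

(* Coefficient of z^n in  _{q+1}F_q(sigma, a_0..a_{q-1}; b_0..b_{q-1}; z)
   (the paper's a_1..a_q, b_1..b_q are indexed here from 0 to q-1). *)
Definition hyp_coef (q : nat) (sigma : R) (a b : nat -> R) (n : nat) : R :=
  poch sigma n * prodR q (fun i => poch (a i) n / poch (b i) n) / INR (Factorial.fact n).

Definition real_analytic_on (U : R -> Prop) (f : R -> R) : Prop :=
  forall x0, U x0 -> exists r, 0 < r /\ exists c : nat -> R,
    forall x, Rabs (x - x0) < r -> is_pseries c (x - x0) (f x).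

(* f is the (real) analytic continuation of the hypergeometric series to
   (-oo, 1), i.e. the restriction to the real axis of the analytic
   continuation of  _{q+1}F_q  to C \ [1, oo). *)
Definition is_hyp_pFq (q : nat) (sigma : R) (a b : nat -> R) (f : R -> R) : Prop :=
  real_analytic_on (fun z => z < 1) f /\
  forall z, -1 < z < 1 -> is_pseries (hyp_coef q sigma a b) z (f z).

(* Main.v *)
Require Import Defs.
From Stdlib Require Import Reals Lra Lia.
From Coquelicot Require Import Coquelicot.
Open Scope R_scope.
Notation fact := Factorial.fact.

Fixpoint bn (n k : nat) : R :=
  match n, k with
  | _, O => 1
  | O, S _ => 0
  | S n', S k' => bn n' k' + bn n' (S k')
  end.

Lemma bn_gt n k : (n < k)%nat -> bn n k = 0.
Proof.
  revert k; induction n as [|n IH]; intros [|k] H; simpl; try lia; auto.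
  rewrite !IH; try lia; ring.
Qed.

Lemma bn_0 n : bn n 0 = 1.
Proof. destruct n; reflexivity. Qed.

Lemma bn_ge0 n k : 0 <= bn n k.
Proof.
  revert k; induction n as [|n IH]; intros [|k]; simpl; try lra.
  specialize (IH k) as H1; specialize (IH (S k)) as H2; lra.
Qed.

Fixpoint mu (m : nat -> R) (a n : nat) : R :=
  match n with
  | O => m a
  | S n' => mu m a n' - mu m (S a) n'
  end.

Lemma mu_ext m1 m2 : (forall k, m1 k = m2 k) -> forall n a, mu m1 a n = mu m2 a n.
Proof. intros H n; induction n; intros a; simpl; auto. rewrite !IHn; auto. Qed.

Lemma sum_ext f g n : (forall i, (i <= n)%nat -> f i = g i) -> sum_f_R0 f n = sum_f_R0 g n.
Proof. apply sum_eq. Qed.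

Lemma mu_ID m1 m2 n : forall a,
  mu (fun k => m1 k * m2 k) a n =
  sum_f_R0 (fun j => bn n j * mu m1 a j * mu m2 (a + j) (n - j)) n.
Proof.
  induction n as [|n IH]; intros a.
  - simpl. rewrite Nat.add_0_r. ring.
  - simpl mu at 1. rewrite !IH.
    rewrite (decomp_sum _ (S n)); [|lia]. simpl pred.
    simpl bn at 1. rewrite Nat.add_0_r, Nat.sub_0_r.
    set (X := sum_f_R0 (fun j => bn n j * mu m1 a j * mu m2 (S a + j) (n - j)) n).
    transitivity (mu m1 a 0 * mu m2 a (S n) +
       sum_f_R0 (fun i => bn n (S i) * mu m1 a (S i) * mu m2 (a + S i) (n - i)) n
       + (X - sum_f_R0 (fun j => bn n j * mu m1 (S a) j * mu m2 (S a + j) (n - j)) n)).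
    2:{ simpl bn at 1. rewrite Rplus_assoc. rewrite Rmult_1_l. f_equal.
      unfold X. rewrite <- minus_sum, <- plus_sum. apply sum_ext. intros i Hi.
      simpl bn. change (mu m1 a (S i)) with (mu m1 a i - mu m1 (S a) i). replace (S n - S i)%nat with (n - i)%nat by lia.
      replace (a + S i)%nat with (S a + i)%nat by lia. ring. }
    assert (HY : mu m1 a 0 * mu m2 a (S n) +
          sum_f_R0 (fun i => bn n (S i) * mu m1 a (S i) * mu m2 (a + S i) (n - i)) n
        = sum_f_R0 (fun j => bn n j * mu m1 a j * mu m2 (a + j) (n - j)) n - X).
    { destruct n as [|n'].
      - simpl. unfold X. simpl. rewrite !Nat.add_0_r. replace (a+1)%nat with (S a) by lia. ring.
      - rewrite tech5. rewrite (bn_gt (S n') (S (S n'))) by lia.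
        rewrite Rmult_0_l, Rmult_0_l, Rplus_0_r.
        unfold X. rewrite <- minus_sum. rewrite (decomp_sum _ (S n')) by lia. simpl pred.
        simpl bn at 2. rewrite Nat.add_0_r, Nat.sub_0_r.
        replace (mu m2 a (S (S n'))) with (mu m2 a (S n') - mu m2 (S a) (S n')) by reflexivity.
        assert (sum_f_R0 (fun i => bn (S n') (S i) * mu m1 a (S i) * mu m2 (a + S i) (S n' - i)) n'
           = sum_f_R0 (fun i => (bn (S n') (S i) * mu m1 a (S i) * mu m2 (a + S i) (S n' - S i) -
               bn (S n') (S i) * mu m1 a (S i) * mu m2 (S a + S i) (S n' - S i))) n').
        { apply sum_ext; intros i Hi. replace (S n' - i)%nat with (S (S n' - S i)) by lia.
          replace (a + S i)%nat with (S a + i)%nat by lia.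
          change (mu m2 (S a + i) (S (S n' - S i))) with (mu m2 (S a + i) (S n' - S i) - mu m2 (S (S a + i)) (S n' - S i)).
          replace (S (S a + i)) with (S a + S i)%nat by lia. ring. }
        rewrite H. simpl bn. rewrite Nat.add_0_r. ring. }
    rewrite HY. unfold X. ring.
Qed.

Lemma poch_pos x n : 0 < x -> 0 < poch x n.
Proof.
  intros Hx; induction n; simpl; [lra|]. apply Rmult_lt_0_compat; auto.
  pose proof (pos_INR n); lra.
Qed.

Lemma poch_add x m n : poch x (m + n) = poch x m * poch (x + INR m) n.
Proof.
  induction n.
  - rewrite Nat.add_0_r; simpl; ring.
  - rewrite Nat.add_succ_r; simpl; rewrite IHn, plus_INR; ring.
Qed.

Lemma poch_1 x : poch x 1 = x.
Proof. simpl. ring. Qed.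

Lemma mu_dirac d a n : mu (fun k => d ^ k) a n = d ^ a * (1 - d) ^ n.
Proof.
  revert a; induction n; intros a; simpl; [ring|]. rewrite !IHn. simpl. ring.
Qed.

Lemma mu_beta a b : 0 < a -> a < b -> forall n al,
  mu (fun k => poch a k / poch b k) al n = poch a al * poch (b - a) n / poch b (al + n).
Proof.
  intros Ha Hab n; induction n; intros al; simpl mu.
  - rewrite Nat.add_0_r. simpl. field. apply Rgt_not_eq, poch_pos; lra.
  - rewrite !IHn. replace (S al + n)%nat with (al + S n)%nat by lia.
    simpl poch. replace (al + S n)%nat with (S (al + n)) by lia. simpl poch.
    rewrite plus_INR.
    assert (0 < poch b (al + n)) by (apply poch_pos; lra).
    pose proof (pos_INR al); pose proof (pos_INR n).
    field. split; [lra|]. apply Rgt_not_eq; auto.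
Qed.

Lemma shift_sum f n : f (S n) = 0 ->
  sum_f_R0 (fun i => f (S i)) n = sum_f_R0 f n - f O.
Proof.
  intros H. pose proof (decomp_sum f (S n)) as D. simpl pred in D.
  rewrite tech5, H in D. specialize (D ltac:(lia)). lra.
Qed.

Lemma mu_sum m n : forall a,
  mu m a n = sum_f_R0 (fun k => bn n k * (-1) ^ k * m (a + k)%nat) n.
Proof.
  induction n; intros a.
  - simpl. rewrite Nat.add_0_r. ring.
  - simpl mu. rewrite !IHn. rewrite (decomp_sum _ (S n)) by lia. simpl pred.
    rewrite Nat.add_0_r. simpl bn at 1.
    transitivity (m a + (- sum_f_R0 (fun k => bn n k * (-1) ^ k * m (S a + k)%nat) n
        + sum_f_R0 (fun i => bn n (S i) * (-1) ^ S i * m (a + S i)%nat) n)).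
    + rewrite (shift_sum (fun k => bn n k * (-1) ^ k * m (a + k)%nat)).
      * rewrite Nat.add_0_r. simpl. rewrite bn_0. ring.
      * rewrite bn_gt by lia. ring.
    + rewrite Rmult_1_l, Rmult_1_l. f_equal.
      transitivity (sum_f_R0 (fun i => (bn n i * (-1)^i * m (S a + i)%nat) * (-1)) n +
        sum_f_R0 (fun i => bn n (S i) * (-1) ^ S i * m (a + S i)%nat) n).
      { rewrite <- scal_sum. ring. }
      rewrite <- plus_sum. apply sum_ext. intros i Hi. simpl bn.
      replace (a + S i)%nat with (S a + i)%nat by lia. simpl pow. ring.
Qed.


Lemma pba_ge a b : 0 < a -> a < b -> forall j,
  ((b - a) / b) ^ j <= poch (b - a) j / poch b j.
Proof.
  intros Ha Hab j; induction j; simpl.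
  - lra.
  - assert (0 < poch b j) by (apply poch_pos; lra).
    assert (0 < poch (b-a) j) by (apply poch_pos; lra).
    pose proof (pos_INR j).
    replace (poch (b - a) j * (b - a + INR j) / (poch b j * (b + INR j)))
      with (((b - a + INR j) / (b + INR j)) * (poch (b - a) j / poch b j)) by (field; split; lra).
    apply Rmult_le_compat.
    + apply Rlt_le, Rdiv_lt_0_compat; lra.
    + apply pow_le, Rlt_le, Rdiv_lt_0_compat; lra.
    + assert (E: (b - a + INR j) / (b + INR j) - (b-a)/b = a * INR j / (b * (b + INR j))) by (field; lra).
      assert (0 <= a * INR j / (b * (b + INR j))).
      { unfold Rdiv; apply Rmult_le_pos; [nra | apply Rlt_le, Rinv_0_lt_compat; nra]. }
      lra.
    + auto.
Qed.

Definition sq (a b : nat -> R) (q : nat) (d : R) (k : nat) : R :=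
  d ^ k * prodR q (fun i => poch (a i) k / poch (b i) k).

Lemma sum_nonneg f n : (forall i, (i <= n)%nat -> 0 <= f i) -> 0 <= sum_f_R0 f n.
Proof.
  induction n; intros H; simpl; [apply H; lia|].
  apply Rplus_le_le_0_compat; [apply IHn; intros; apply H; lia| apply H; lia].
Qed.

Lemma moments_claim a b q : (forall i, (i < q)%nat -> 0 < a i /\ a i < b i) ->
  forall d, 0 <= d <= 1 ->
  (forall al n, 0 <= mu (sq a b q d) al n) /\
  (forall n, (1 - sq a b q d 1) ^ n <= mu (sq a b q d) 0 n).
Proof.
  induction q as [|q IH]; intros Hab d Hd.
  - assert (E : forall al n, mu (sq a b 0 d) al n = d ^ al * (1 - d) ^ n).
    { intros al n. rewrite <- mu_dirac. apply mu_ext. intros k. unfold sq; simpl; ring. }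
    split.
    + intros al n. rewrite E. apply Rmult_le_pos; apply pow_le; lra.
    + intros n. rewrite E. unfold sq. simpl. rewrite !Rmult_1_r, Rmult_1_l. lra.
  - destruct (Hab q ltac:(lia)) as [Ha Hb].
    assert (Hab' : forall i, (i < q)%nat -> 0 < a i /\ a i < b i) by (intros; apply Hab; lia).
    set (be := fun k => poch (a q) k / poch (b q) k).
    set (c := a q / b q).
    assert (Hc : 0 < c < 1).
    { unfold c; split; [apply Rdiv_lt_0_compat; lra|]. apply (Rmult_lt_reg_r (b q)); [lra|]. unfold Rdiv; rewrite Rmult_assoc, Rinv_l; lra. }
    assert (E : forall al n, mu (sq a b (S q) d) al n = mu (fun k => be k * sq a b q d k) al n).
    { intros; apply mu_ext; intros k; unfold sq, be; simpl; ring. }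
    assert (Hbe : forall al j, 0 <= mu be al j).
    { intros al j. unfold be. rewrite mu_beta by lra.
      pose proof (poch_pos (a q) al Ha). pose proof (poch_pos (b q - a q) j ltac:(lra)).
      pose proof (poch_pos (b q) (al + j) ltac:(lra)).
      apply Rlt_le, Rdiv_lt_0_compat; [apply Rmult_lt_0_compat|]; lra. }
    destruct (IH Hab' d Hd) as [Pos Jen].
    split.
    + intros al n. rewrite E, mu_ID. apply sum_nonneg. intros j Hj.
      apply Rmult_le_pos; [apply Rmult_le_pos|]; auto using bn_ge0.
    + intros n. rewrite E, mu_ID.
      assert (Hcd : 0 <= c * d <= 1) by nra.
      destruct (IH Hab' (c * d) Hcd) as [_ Jen2].
      apply Rle_trans with (mu (sq a b q (c * d)) 0 n).
      * replace (sq a b (S q) d 1) with (sq a b q (c * d) 1).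
        -- apply Jen2.
        -- unfold sq, c. simpl. rewrite !Rmult_1_r. field. lra.
      * assert (E2 : mu (sq a b q (c * d)) 0 n = mu (fun k => c ^ k * sq a b q d k) 0 n).
        { apply mu_ext. intros k; unfold sq. rewrite Rpow_mult_distr. ring. }
        rewrite E2, mu_ID. apply sum_Rle. intros j Hj.
        rewrite mu_dirac. apply Rmult_le_compat_r; [apply Pos|].
        apply Rmult_le_compat_l; [apply bn_ge0|].
        unfold be. rewrite mu_beta by lra. simpl. rewrite Rmult_1_l.
        replace (1 - c) with ((b q - a q) / b q) by (unfold c; field; lra).
        rewrite Rmult_1_l. apply pba_ge; lra.
Qed.

Definition bco (be : R) (j : nat) : R := poch be j / INR (fact j).



Lemma poch_pos' x n : 0 < x -> 0 < poch x n.
Proof.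
  intros Hx; induction n; simpl; [lra|]. apply Rmult_lt_0_compat; auto.
  pose proof (pos_INR n); lra.
Qed.

Lemma bco_ratio be n : 0 < be -> bco be (S n) / bco be n = (be + INR n) / INR (S n).
Proof.
  intros Hb. unfold bco. simpl poch. rewrite fact_simpl, mult_INR.
  pose proof (poch_pos' be n Hb). pose proof (INR_fact_lt_0 n).
  assert (0 < INR (S n)) by (apply lt_0_INR; lia).
  field. repeat split; lra.
Qed.

Lemma bco_lim be : 0 < be -> is_lim_seq (fun n => Rabs (bco be (S n) / bco be n)) 1.
Proof.
  intros Hb.
  apply is_lim_seq_ext with (fun n => 1 + (be - 1) * / INR (S n)).
  { intros n. rewrite bco_ratio by auto. rewrite S_INR.
    pose proof (pos_INR n). rewrite Rabs_pos_eq.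
    - field; lra.
    - apply Rlt_le, Rdiv_lt_0_compat; lra. }
  replace (Finite 1) with (Finite (1 + (be - 1) * 0)) by (f_equal; ring).
  apply is_lim_seq_plus'; [apply is_lim_seq_const|].
  apply is_lim_seq_mult'; [apply is_lim_seq_const|].
  assert (H : is_lim_seq (fun n => / INR (S n)) (Rbar_inv p_infty)).
  { apply is_lim_seq_inv; [|discriminate].
    apply (is_lim_seq_incr_1 INR). apply is_lim_seq_INR. }
  exact H.
Qed.

Lemma bco_radius be : 0 < be -> CV_radius (bco be) = 1.
Proof.
  intros Hb. replace (Finite 1) with (Finite (/ 1)) by (f_equal; lra).
  apply CV_radius_finite_DAlembert; [|lra|apply bco_lim; auto].
  intros n. unfold bco. apply Rgt_not_eq, Rdiv_lt_0_compat.
  - apply poch_pos'; auto.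
  - apply INR_fact_lt_0.
Qed.

Lemma bco_ode be u : 0 < be -> Rabs u < 1 ->
  (1 - u) * PSeries (PS_derive (bco be)) u = be * PSeries (bco be) u.
Proof.
  intros Hb Hu.
  assert (Hr : Rbar_lt (Rabs u) (CV_radius (bco be))) by (rewrite bco_radius; simpl; auto).
  assert (HD : is_pseries (PS_derive (bco be)) u (PSeries (PS_derive (bco be)) u)).
  { apply PSeries_correct. apply CV_radius_inside. rewrite CV_radius_derive. auto. }
  assert (HS : is_pseries (bco be) u (PSeries (bco be) u)).
  { apply PSeries_correct. apply CV_radius_inside. auto. }
  pose proof (is_pseries_incr_1 _ _ _ HD) as H1.
  pose proof (is_pseries_scal be _ _ _ ltac:(apply Rmult_comm) HS) as H2.
  pose proof (is_pseries_plus _ _ _ _ _ H2 H1) as H3.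
  assert (H4 : is_pseries (PS_derive (bco be)) u
     (plus (scal be (PSeries (bco be) u)) (scal u (PSeries (PS_derive (bco be)) u)))).
  { eapply is_pseries_ext; [|exact H3].
    intros n. unfold PS_plus, PS_scal, PS_incr_1, PS_derive. destruct n.
    - simpl. unfold bco. simpl. change (scal be (1 / 1) + zero = 1 * ((1 * (be + 0)) / 1)).
      unfold scal, zero; simpl; unfold mult; simpl. field.
    - change (be * bco be (S n) + INR (S n) * bco be (S n) = INR (S (S n)) * bco be (S (S n))).
      unfold bco. change (poch be (S (S n))) with (poch be (S n) * (be + INR (S n))).
      rewrite (fact_simpl (S n)), mult_INR.
      pose proof (INR_fact_lt_0 (S n)). pose proof (pos_INR (S n)).
      rewrite (S_INR (S n)). field. lra. }
  pose proof (is_pseries_unique _ _ _ H4) as E.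
  unfold plus, scal in E; simpl in E; unfold mult in E; simpl in E.
  lra.
Qed.

Lemma Rpower_base1 y : Rpower 1 y = 1.
Proof. unfold Rpower. rewrite ln_1, Rmult_0_r, exp_0. reflexivity. Qed.

Lemma is_derive_Rpower_1m be u : u < 1 ->
  is_derive (fun u => Rpower (1 - u) be) u (- be * Rpower (1 - u) (be - 1)).
Proof.
  intros Hu. unfold Rpower.
  auto_derive; [lra|].
  replace (be - 1) with (be + - 1) by ring.
  rewrite Rmult_plus_distr_r, exp_plus.
  replace (-1 * ln (1 - u)) with (- ln (1 - u)) by ring. rewrite exp_Ropp, exp_ln by lra.
  replace (1 + - u) with (1 - u) by ring. field. lra.
Qed.

Lemma binom_series be u : 0 < be -> Rabs u < 1 ->
  is_pseries (bco be) u (Rpower (1 - u) (- be)).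
Proof.
  intros Hb Hu.
  assert (Hr : forall v, Rabs v < 1 -> Rbar_lt (Rabs v) (CV_radius (bco be)))
    by (intros; rewrite bco_radius; simpl; auto).
  set (g := fun v => PSeries (bco be) v * Rpower (1 - v) be).
  assert (Hg : forall v, Rabs v < 1 -> is_derive g v 0).
  { intros v Hv. unfold g.
    assert (Hv1 : v < 1) by (apply Rabs_def2 in Hv; lra).
    eapply is_derive_ext; [intros; reflexivity|].
    replace 0 with (PSeries (PS_derive (bco be)) v * Rpower (1 - v) be +
         PSeries (bco be) v * (- be * Rpower (1 - v) (be - 1))).
    - apply (is_derive_mult (PSeries (bco be)) (fun u => Rpower (1 - u) be)).
      + apply is_derive_PSeries; auto.
      + apply is_derive_Rpower_1m; auto.
      + intros; apply Rmult_comm.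
    - replace (Rpower (1 - v) be) with ((1 - v) * Rpower (1 - v) (be - 1)).
      + pose proof (bco_ode be v Hb Hv) as O.
        replace (PSeries (PS_derive (bco be)) v * ((1 - v) * Rpower (1 - v) (be - 1)))
          with (((1 - v) * PSeries (PS_derive (bco be)) v) * Rpower (1 - v) (be - 1)) by ring.
        rewrite O. ring.
      + replace be with (1 + (be - 1)) at 2 by ring. rewrite Rpower_plus, Rpower_1 by lra. ring. }
  assert (Hgu : g u = g 0).
  { destruct (MVT_gen g 0 u (fun _ => 0)) as [c [Hc E]].
    - intros x Hx. apply Hg. apply Rabs_def1.
      + apply Rle_lt_trans with (Rmax 0 u); [lra|]. apply Rmax_lub_lt; [lra|]. apply Rabs_def2 in Hu; lra.
      + apply Rlt_le_trans with (Rmin 0 u); [|lra]. apply Rmin_glb_lt; [lra|]. apply Rabs_def2 in Hu; lra.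
    - intros x Hx. apply continuity_pt_filterlim. apply (@ex_derive_continuous R_AbsRing R_NormedModule g x).
      eexists. apply Hg. apply Rabs_def1.
      + apply Rle_lt_trans with (Rmax 0 u); [lra|]. apply Rmax_lub_lt; [lra|]. apply Rabs_def2 in Hu; lra.
      + apply Rlt_le_trans with (Rmin 0 u); [|lra]. apply Rmin_glb_lt; [lra|]. apply Rabs_def2 in Hu; lra.
    - lra. }
  unfold g in Hgu. rewrite PSeries_0, Rminus_0_r, Rpower_base1 in Hgu.
  replace (bco be 0) with 1 in Hgu by (unfold bco; simpl; field).
  assert (Hpos : 0 < Rpower (1 - u) be) by (unfold Rpower; apply exp_pos).
  assert (E : PSeries (bco be) u = Rpower (1 - u) (- be)).
  { rewrite Rpower_Ropp. apply (Rmult_eq_reg_r (Rpower (1 - u) be)); [|lra].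
    rewrite Hgu. field. lra. }
  rewrite <- E. apply PSeries_correct, CV_radius_inside. auto.
Qed.

Lemma sum_f_R0_shift_abs (a : nat -> R) m M :
  Rabs (sum_f_R0 a (M + m) - sum_f_R0 a m) <=
  sum_f_R0 (fun j => Rabs (a j)) (M + m) - sum_f_R0 (fun j => Rabs (a j)) m.
Proof.
  induction M; simpl.
  - rewrite !Rminus_diag, Rabs_R0. lra.
  - replace (sum_f_R0 a (M + m) + a (S (M + m)) - sum_f_R0 a m)
      with ((sum_f_R0 a (M + m) - sum_f_R0 a m) + a (S (M + m))) by ring.
    eapply Rle_trans; [apply Rabs_triang|]. lra.
Qed.

Lemma series_lim (a : nat -> R) (l : R) : is_series a l -> is_lim_seq (sum_f_R0 a) l.
Proof.
  intros H. apply is_lim_seq_Reals. apply is_series_Reals in H. exact H.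
Qed.

Lemma lim_series (a : nat -> R) (l : R) : is_lim_seq (sum_f_R0 a) l -> is_series a l.
Proof.
  intros H. apply is_series_Reals. apply is_lim_seq_Reals in H. exact H.
Qed.

Lemma tail_bound (a : nat -> R) (l la : R) m :
  is_series a l -> is_series (fun j => Rabs (a j)) la ->
  Rabs (l - sum_f_R0 a m) <= la - sum_f_R0 (fun j => Rabs (a j)) m.
Proof.
  intros H1 H2. apply series_lim in H1; apply series_lim in H2.
  assert (L1 : is_lim_seq (fun M => Rabs (sum_f_R0 a (M + m) - sum_f_R0 a m)) (Rabs (l - sum_f_R0 a m))).
  { apply (is_lim_seq_abs _ (Finite (l - sum_f_R0 a m))).
    apply is_lim_seq_minus'; [|apply is_lim_seq_const].
    apply (is_lim_seq_incr_n (sum_f_R0 a) m l) in H1.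
    eapply is_lim_seq_ext; [|exact H1]. intros n. simpl. reflexivity. }
  assert (L2 : is_lim_seq (fun M => sum_f_R0 (fun j => Rabs (a j)) (M + m) - sum_f_R0 (fun j => Rabs (a j)) m)
                 (la - sum_f_R0 (fun j => Rabs (a j)) m)).
  { apply is_lim_seq_minus'; [|apply is_lim_seq_const].
    apply (is_lim_seq_incr_n _ m la) in H2. exact H2. }
  pose proof (is_lim_seq_le _ _ _ _ (fun M => sum_f_R0_shift_abs a m M) L1 L2) as H. simpl in H. exact H.
Qed.

Lemma tri_sum (a : nat -> nat -> R) K :
  sum_f_R0 (fun k => sum_f_R0 (fun n => a n (k - n)%nat) k) K =
  sum_f_R0 (fun n => sum_f_R0 (a n) (K - n)) K.
Proof.
  induction K.
  - reflexivity.
  - rewrite tech5, IHK. cbv beta.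
    assert (E1: sum_f_R0 (fun n => a n (S K - n)%nat) (S K) = sum_f_R0 (fun n => a n (S K - n)%nat) K + a (S K) 0%nat)
      by (rewrite tech5, Nat.sub_diag; reflexivity).
    assert (E2: sum_f_R0 (fun n => sum_f_R0 (a n) (S K - n)) (S K) = sum_f_R0 (fun n => sum_f_R0 (a n) (K - n) + a n (S K - n)%nat) K + a (S K) 0%nat).
    { rewrite tech5, Nat.sub_diag. f_equal. apply sum_eq. intros n Hn. replace (S K - n)%nat with (S (K - n)) by lia. reflexivity. }
    rewrite E1, E2, plus_sum. ring.
Qed.

Lemma unif_index (P : nat -> nat -> Prop) :
  (forall n, exists M, forall m, (m >= M)%nat -> P n m) ->
  forall N, exists M, forall n m, (n <= N)%nat -> (m >= M)%nat -> P n m.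
Proof.
  intros H N. induction N.
  - destruct (H 0%nat) as [M HM]. exists M. intros n m Hn Hm. replace n with 0%nat by lia. auto.
  - destruct IHN as [M1 H1]. destruct (H (S N)) as [M2 H2]. exists (Nat.max M1 M2).
    intros n m Hn Hm. destruct (Nat.eq_dec n (S N)) as [->|Hne].
    + apply H2; lia.
    + apply H1; lia.
Qed.

Lemma partial_le_lim (u : nat -> R) l N :
  (forall n, 0 <= u n) -> is_series u l -> sum_f_R0 u N <= l.
Proof.
  intros Hp H. apply series_lim in H.
  assert (L : is_lim_seq (fun M => sum_f_R0 u (M + N)) l) by (apply (is_lim_seq_incr_n _ N l) in H; exact H).
  assert (Hle : forall M, sum_f_R0 u N <= sum_f_R0 u (M + N)).
  { induction M; simpl; [lra|]. specialize (Hp (S (M + N))). lra. }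
  pose proof (is_lim_seq_le _ _ _ _ Hle (is_lim_seq_const _) L) as R. exact R.
Qed.

Lemma sum_nonneg' f n : (forall i, (i <= n)%nat -> 0 <= f i) -> 0 <= sum_f_R0 f n.
Proof.
  induction n; intros H; simpl; [apply H; lia|].
  apply Rplus_le_le_0_compat; [apply IHn; intros; apply H; lia| apply H; lia].
Qed.

Lemma dbl_series (a : nat -> nat -> R) (r ra : nat -> R) (l SA : R) :
  (forall n, is_series (a n) (r n)) ->
  (forall n, is_series (fun j => Rabs (a n j)) (ra n)) ->
  is_series ra SA -> is_series r l ->
  is_series (fun k => sum_f_R0 (fun n => a n (k - n)%nat) k) l.
Proof.
  intros Hr Hra HSA Hl.
  set (t := fun n m => ra n - sum_f_R0 (fun j => Rabs (a n j)) m).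
  assert (Ht1 : forall n m, Rabs (r n - sum_f_R0 (a n) m) <= t n m).
  { intros; apply tail_bound; auto. }
  assert (Hsa : forall n m, 0 <= sum_f_R0 (fun j => Rabs (a n j)) m).
  { intros; apply sum_nonneg'; intros; apply Rabs_pos. }
  assert (Ht2 : forall n m, t n m <= ra n) by (intros; unfold t; specialize (Hsa n m); lra).
  assert (Hra0 : forall n, 0 <= ra n).
  { intros n. specialize (Ht1 n 0%nat). specialize (Hsa n 0%nat). pose proof (Rabs_pos (r n - sum_f_R0 (a n) 0)).
    unfold t in Ht1. lra. }
  assert (Ht3 : forall n, is_lim_seq (t n) 0).
  { intros n. unfold t. replace (Finite 0) with (Finite (ra n - ra n)) by (f_equal; ring).
    apply is_lim_seq_minus'; [apply is_lim_seq_const|]. apply series_lim, Hra. }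
  apply lim_series. apply is_lim_seq_Reals. intros eps Heps.
  set (e3 := eps / 3).
  assert (He3 : 0 < e3) by (unfold e3; lra).
  apply series_lim, is_lim_seq_Reals in Hl.
  destruct (Hl e3 He3) as [N1 HN1].
  pose proof (series_lim _ _ HSA) as HSA'. apply is_lim_seq_Reals in HSA'.
  destruct (HSA' e3 He3) as [N HN].
  assert (HN' : SA - sum_f_R0 ra N < e3).
  { specialize (HN N ltac:(lia)). unfold Rdist in HN. apply Rabs_def2 in HN. lra. }
  set (e4 := e3 / INR (S N)).
  assert (He4 : 0 < e4) by (unfold e4; apply Rdiv_lt_0_compat; [lra| apply lt_0_INR; lia]).
  destruct (unif_index (fun n m => t n m < e4)) with N as [M HM].
  { intros n. pose proof (Ht3 n) as L. apply is_lim_seq_Reals in L. destruct (L e4 He4) as [M HM].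
    exists M. intros m Hm. specialize (HM m Hm). unfold Rdist in HM. apply Rabs_def2 in HM. lra. }
  exists (Nat.max N1 (S (N + M))). intros K HK.
  unfold Rdist. rewrite tri_sum.
  assert (A1 : Rabs (sum_f_R0 r K - l) < e3) by (apply HN1; lia).
  assert (A2 : Rabs (sum_f_R0 (fun n => sum_f_R0 (a n) (K - n)) K - sum_f_R0 r K) <=
               sum_f_R0 (fun n => t n (K - n)%nat) K).
  { rewrite <- minus_sum. eapply Rle_trans; [apply sum_f_R0_triangle|]. apply sum_Rle.
    intros n Hn. rewrite <- Rabs_Ropp. replace (- (sum_f_R0 (a n) (K - n) - r n)) with (r n - sum_f_R0 (a n) (K - n)) by ring.
    apply Ht1. }
  assert (A3 : sum_f_R0 (fun n => t n (K - n)%nat) K < 2 * e3).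
  { rewrite (tech2 _ N K) by lia.
    assert (B1 : sum_f_R0 (fun n => t n (K - n)%nat) N <= e3).
    { apply Rle_trans with (sum_f_R0 (fun _ => e4) N).
      - apply sum_Rle. intros n Hn. left. apply HM; lia.
      - rewrite sum_cte. unfold e4. right. field. apply Rgt_not_eq, lt_0_INR; lia. }
    assert (B2 : sum_f_R0 (fun i => t (S N + i)%nat (K - (S N + i))%nat) (K - S N) <= sum_f_R0 ra K - sum_f_R0 ra N).
    { rewrite (tech2 ra N K) by lia.
      apply Rle_trans with (sum_f_R0 (fun i => ra (S N + i)%nat) (K - S N)); [|lra].
      apply sum_Rle. intros; apply Ht2. }
    assert (B3 : sum_f_R0 ra K <= SA) by (apply partial_le_lim; auto).
    lra. }
  replace (sum_f_R0 (fun n => sum_f_R0 (a n) (K - n)) K - l) with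
    ((sum_f_R0 (fun n => sum_f_R0 (a n) (K - n)) K - sum_f_R0 r K) + (sum_f_R0 r K - l)) by ring.
  eapply Rle_lt_trans; [apply Rabs_triang|]. unfold e3 in *. lra.
Qed.

Lemma radius_gt (c : nat -> R) r x : (forall y, Rabs y < r -> ex_pseries c y) -> Rabs x < r ->
  Rbar_lt (Rabs x) (CV_radius c).
Proof.
  intros H Hx.
  set (x' := (Rabs x + r) / 2).
  assert (Hx' : Rabs x < x' < r) by (unfold x'; lra).
  assert (Hle : Rbar_le x' (CV_radius c)).
  { apply Rbar_not_lt_le. intros Hlt.
    assert (Hx'0 : 0 <= x') by (pose proof (Rabs_pos x); lra).
    apply (CV_disk_outside c x'). { rewrite Rabs_pos_eq by lra. exact Hlt. }
    apply ex_series_lim_0. destruct (H x') as [l Hl]. { rewrite Rabs_pos_eq; lra. }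
    exists l. apply is_pseries_R in Hl. exact Hl. }
  destruct (CV_radius c) as [R| |]; simpl in *; auto; lra.
Qed.

Lemma pow_helper (d A : R) n m : A <> 0 ->
  (- d / (A * A)) ^ n * (d / A) ^ m = (-1) ^ n / A ^ (n + (n + m)) * d ^ (n + m).
Proof.
  intros HA. unfold Rdiv.
  replace (- d * / (A * A)) with ((-1) * d * / A * / A) by (field; auto).
  rewrite <- (pow_inv A (n + (n + m))). rewrite !Rpow_mult_distr, !pow_add. ring.
Qed.

Lemma Rpower_neg_plus x s n : 0 < x ->
  Rpower x (- (s + INR n)) = Rpower x (- s) * / x ^ n.
Proof.
  intros Hx. replace (- (s + INR n)) with (- s + - INR n) by ring.
  rewrite Rpower_plus, (Rpower_Ropp x (INR n)), Rpower_pow by auto. reflexivity.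
Qed.

Lemma bco_nonneg be j : 0 < be -> 0 <= bco be j.
Proof.
  intros H. unfold bco. apply Rlt_le, Rdiv_lt_0_compat; [apply poch_pos; auto| apply INR_fact_lt_0].
Qed.

Lemma is_series_Rmult_l (k : R) (a : nat -> R) l : is_series a l -> is_series (fun n => k * a n) (k * l).
Proof.
  intros H. pose proof (is_series_scal_r k a l H) as H2.
  rewrite (Rmult_comm k l). eapply is_series_ext; [|exact H2]. intros n. simpl. apply Rmult_comm.
Qed.

Definition Hf (s : R) (F : R -> R) (w : R) : R := Rpower (1 - w) (- s) * F (w / (w - 1)).

Definition ecoef (s : R) (c : nat -> R) (A : R) (k : nat) : R :=
  Rpower A (- s) * sum_f_R0 (fun n => c n * ((-1) ^ n / A ^ (n + k)) * bco (s + INR n) (k - n)) k.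

Lemma transform (s : R) (F : R -> R) (z0 r : R) (c : nat -> R) :
  0 < s -> z0 < 1 -> 0 < r ->
  (forall z, Rabs (z - z0) < r -> is_pseries c (z - z0) (F z)) ->
  exists rho, 0 < rho /\ forall w, Rabs (w - z0 / (z0 - 1)) < rho ->
    is_pseries (ecoef s c (1 - z0 / (z0 - 1))) (w - z0 / (z0 - 1)) (Hf s F w).
Proof.
  intros Hs Hz0 Hr HF.
  set (w0 := z0 / (z0 - 1)). set (A := 1 - w0).
  assert (HAe : A = / (1 - z0)) by (unfold A, w0; field; lra).
  assert (HA : 0 < A) by (rewrite HAe; apply Rinv_0_lt_compat; lra).
  assert (Hrad : forall y, Rabs y < r -> Rbar_lt (Rabs y) (CV_radius c)).
  { intros y Hy. apply (radius_gt c r); auto. intros y' Hy'. exists (F (y' + z0)).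
    pose proof (HF (y' + z0)) as HH. replace (y' + z0 - z0) with y' in HH by ring. apply HH; auto. }
  exists (Rmin (A / 2) (A * A * r / 4)). split.
  { apply Rmin_glb_lt; [lra|]. apply Rmult_lt_0_compat; [|lra]. apply Rmult_lt_0_compat; [apply Rmult_lt_0_compat|]; lra. }
  intros w Hw. set (d := w - w0).
  assert (Hd1 : Rabs d < A / 2) by (apply Rlt_le_trans with (1 := Hw); apply Rmin_l).
  assert (Hd2 : Rabs d < A * A * r / 4) by (apply Rlt_le_trans with (1 := Hw); apply Rmin_r).
  set (u := d / A).
  assert (Hu : Rabs u < / 2).
  { unfold u. rewrite Rabs_div, (Rabs_pos_eq A) by lra. apply Rmult_lt_reg_r with A; [lra|].
    unfold Rdiv. rewrite Rmult_assoc, Rinv_l by lra. lra. }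
  assert (Hu1 : Rabs u < 1) by lra.
  assert (Hu2 : 0 < 1 - u) by (apply Rabs_def2 in Hu; lra).
  assert (Hau : 0 < 1 - Rabs u) by lra.
  set (v := - d / (A * A * (1 - u))).
  assert (Hv : Rabs v <= 2 * Rabs d / (A * A)).
  { unfold v, Rdiv. rewrite Rabs_mult, Rabs_Ropp, Rabs_inv.
    rewrite (Rabs_pos_eq (A * A * (1 - u))) by (apply Rlt_le; apply Rmult_lt_0_compat; [apply Rmult_lt_0_compat|]; lra).
    rewrite Rinv_mult.
    assert (I1 : / (1 - u) <= 2).
    { replace 2 with (/ / 2) by field. apply Rinv_le_contravar; [lra|]. apply Rabs_def2 in Hu; lra. }
    assert (I2 : 0 <= Rabs d * / (A * A)).
    { apply Rmult_le_pos; [apply Rabs_pos|]. left; apply Rinv_0_lt_compat; nra. }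
    nra. }
  assert (Hvr : Rabs v < r / 2).
  { apply Rle_lt_trans with (1 := Hv). apply Rmult_lt_reg_r with (A * A); [apply Rmult_lt_0_compat; lra|].
    unfold Rdiv. rewrite Rmult_assoc, Rinv_l by (apply Rgt_not_eq, Rmult_lt_0_compat; lra). lra. }
  assert (Hz : w / (w - 1) = v + z0).
  { assert (Ew : w = 1 - A + d) by (unfold d, A; ring).
    assert (Ez : z0 = 1 - / A) by (rewrite HAe; field; lra).
    assert (HdA : d - A < 0) by (apply Rabs_def2 in Hd1; lra).
    rewrite Ew. unfold v, u. rewrite Ez. field. repeat split; lra. }
  assert (HFv : is_series (fun n => c n * v ^ n) (F (w / (w - 1)))).
  { apply is_pseries_R. rewrite Hz. pose proof (HF (v + z0)) as HH.
    replace (v + z0 - z0) with v in HH by ring. apply HH. lra. }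
  set (a := fun n j => c n * (- d / (A * A)) ^ n * (bco (s + INR n) j * u ^ j)).
  assert (Hsn : forall n, 0 < s + INR n) by (intros; pose proof (pos_INR n); lra).
  assert (Hrow : forall n, is_series (a n) (Rpower (1 - u) (- s) * (c n * v ^ n))).
  { intros n.
    assert (Ev : c n * (- d / (A * A)) ^ n * Rpower (1 - u) (- (s + INR n)) = Rpower (1 - u) (- s) * (c n * v ^ n)).
    { rewrite Rpower_neg_plus by auto.
      replace v with ((- d / (A * A)) * / (1 - u)) by (unfold v; field; lra).
      rewrite Rpow_mult_distr, pow_inv. ring. }
    rewrite <- Ev. eapply is_series_ext.
    2:{ apply (is_series_Rmult_l (c n * (- d / (A * A)) ^ n)).
        pose proof (binom_series (s + INR n) u (Hsn n) Hu1) as B. apply is_pseries_R in B. exact B. }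
    intros j. unfold a. simpl. ring. }
  set (sv := Rabs d / (A * A * (1 - Rabs u))).
  assert (Hsve : sv = (Rabs d / (A * A)) * / (1 - Rabs u)) by (unfold sv; field; lra).
  assert (Hsv0 : 0 <= sv).
  { rewrite Hsve. apply Rmult_le_pos; [|left; apply Rinv_0_lt_compat; lra].
    apply Rmult_le_pos; [apply Rabs_pos| left; apply Rinv_0_lt_compat; nra]. }
  assert (Hsvr : Rabs sv < r).
  { rewrite Rabs_pos_eq by auto. rewrite Hsve.
    assert (I1 : / (1 - Rabs u) <= 2).
    { replace 2 with (/ / 2) by field. apply Rinv_le_contravar; lra. }
    assert (I2 : 0 <= Rabs d / (A * A)).
    { apply Rmult_le_pos; [apply Rabs_pos|]. left; apply Rinv_0_lt_compat; nra. }
    assert (I3 : Rabs d / (A * A) < r / 4).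
    { apply Rmult_lt_reg_r with (A * A); [nra|]. unfold Rdiv. rewrite Rmult_assoc, Rinv_l by nra. lra. }
    nra. }
  destruct (CV_disk_inside c sv (Hrad sv Hsvr)) as [SA0 HSA0].
  assert (Habs : forall n, is_series (fun j => Rabs (a n j)) (Rpower (1 - Rabs u) (- s) * Rabs (c n * sv ^ n))).
  { intros n.
    assert (Ev : Rabs (c n) * (Rabs d / (A * A)) ^ n * Rpower (1 - Rabs u) (- (s + INR n)) =
                 Rpower (1 - Rabs u) (- s) * Rabs (c n * sv ^ n)).
    { rewrite Rpower_neg_plus by auto. rewrite Rabs_mult, (Rabs_pos_eq (sv ^ n)) by (apply pow_le; auto).
      rewrite Hsve, Rpow_mult_distr, pow_inv. ring. }
    rewrite <- Ev. eapply is_series_ext.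
    2:{ apply (is_series_Rmult_l (Rabs (c n) * (Rabs d / (A * A)) ^ n)).
        assert (Hu' : Rabs (Rabs u) < 1) by (rewrite Rabs_Rabsolu; auto).
        pose proof (binom_series (s + INR n) (Rabs u) (Hsn n) Hu') as B. apply is_pseries_R in B. exact B. }
    intros j. unfold a. simpl.
    rewrite !Rabs_mult, <- !RPow_abs.
    rewrite (Rabs_pos_eq (bco _ _)) by (apply bco_nonneg; auto).
    replace (Rabs (- d / (A * A))) with (Rabs d / (A * A)).
    - ring.
    - unfold Rdiv. rewrite Rabs_mult, Rabs_Ropp, Rabs_inv, (Rabs_pos_eq (A * A)) by nra. reflexivity. }
  assert (Htot : is_series (fun n => Rpower (1 - Rabs u) (- s) * Rabs (c n * sv ^ n)) (Rpower (1 - Rabs u) (- s) * SA0))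
    by (apply is_series_Rmult_l; auto).
  assert (Hl : is_series (fun n => Rpower (1 - u) (- s) * (c n * v ^ n)) (Rpower (1 - u) (- s) * F (w / (w - 1))))
    by (apply is_series_Rmult_l; auto).
  pose proof (dbl_series a _ _ _ _ Hrow Habs Htot Hl) as Hdb.
  apply is_pseries_R.
  assert (EH : Hf s F w = Rpower A (- s) * (Rpower (1 - u) (- s) * F (w / (w - 1)))).
  { unfold Hf. rewrite <- Rmult_assoc, Rpower_mult_distr by lra. f_equal. f_equal. unfold u. assert (A <> 0) by lra. field_simplify_eq; auto. unfold d, A. ring. }
  rewrite EH. eapply is_series_ext; [|apply is_series_Rmult_l; exact Hdb].
  intros k. unfold ecoef. rewrite Rmult_assoc. f_equal. rewrite Rmult_comm, scal_sum. apply sum_eq. intros n Hn. unfold a, u.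
  assert (PH := pow_helper d A n (k - n) ltac:(lra)).
  replace (n + (n + (k - n)))%nat with (n + k)%nat in PH by lia.
  replace (n + (k - n))%nat with k in PH by lia.
  transitivity (c n * bco (s + INR n) (k - n) * ((- d / (A * A)) ^ n * (d / A) ^ (k - n))); [ring|].
  rewrite PH. ring.
Qed.

Lemma locally_dist (x eps : R) (P : R -> Prop) : 0 < eps ->
  (forall y, Rabs (y - x) < eps -> P y) -> locally x P.
Proof.
  intros He HP. exists (mkposreal eps He). intros y Hy. apply HP. exact Hy.
Qed.

Definition analytic_at (G : R -> R) (w0 : R) : Prop :=
  exists rho, 0 < rho /\ exists e : nat -> R,
    forall w, Rabs (w - w0) < rho -> is_pseries e (w - w0) (G w).

Lemma deriv_local (G : R -> R) w0 rho e : 0 < rho ->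
  (forall w, Rabs (w - w0) < rho -> is_pseries e (w - w0) (G w)) ->
  forall k h, Rabs h < rho -> Derive_n G k (w0 + h) = PSeries (PS_derive_n k e) h.
Proof.
  intros Hrho He k h Hh.
  assert (Hr : forall y, Rabs y < rho -> Rbar_lt (Rabs y) (CV_radius e)).
  { intros y Hy. apply (radius_gt e rho); auto. intros y' Hy'. exists (G (y' + w0)).
    pose proof (He (y' + w0)) as HH. replace (y' + w0 - w0) with y' in HH by ring. apply HH. lra. }
  rewrite (Derive_n_ext_loc G (fun t => PSeries e (t + - w0))).
  - rewrite Derive_n_comp_trans. replace (w0 + h + - w0) with h by ring.
    apply Derive_n_PSeries. auto.
  - apply (locally_dist _ (rho - Rabs h)); [lra|]. intros y Hy.
    symmetry. apply is_pseries_unique. apply He.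
    replace (y - w0) with ((y - (w0 + h)) + h) by ring.
    eapply Rle_lt_trans; [apply Rabs_triang|]. lra.
Qed.

Lemma deriv_taylor (G : R -> R) w0 rho e : 0 < rho ->
  (forall w, Rabs (w - w0) < rho -> is_pseries e (w - w0) (G w)) ->
  forall k h, Rabs h < rho ->
  is_series (fun j => Derive_n G (k + j) w0 * h ^ j / INR (fact j)) (Derive_n G k (w0 + h)).
Proof.
  intros Hrho He k h Hh.
  assert (Hr : forall y, Rabs y < rho -> Rbar_lt (Rabs y) (CV_radius e)).
  { intros y Hy. apply (radius_gt e rho); auto. intros y' Hy'. exists (G (y' + w0)).
    pose proof (He (y' + w0)) as HH. replace (y' + w0 - w0) with y' in HH by ring. apply HH. lra. }
  rewrite (deriv_local G w0 rho e Hrho He k h Hh).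
  assert (H0 : forall j, Derive_n G (k + j) w0 = e (k + j)%nat * INR (fact (k + j))).
  { intros j. pose proof (deriv_local G w0 rho e Hrho He (k + j) 0 ltac:(rewrite Rabs_R0; lra)) as E.
    rewrite Rplus_0_r in E. rewrite E.
    rewrite <- (Derive_n_PSeries (k + j) e 0) by (apply Hr; rewrite Rabs_R0; lra).
    pose proof (Hr 0 ltac:(rewrite Rabs_R0; lra)) as H0'. rewrite Rabs_R0 in H0'.
    apply Derive_n_coef. exact H0'. }
  assert (Hk : Rbar_lt (Rabs h) (CV_radius (PS_derive_n k e))) by (rewrite CV_radius_derive_n; apply Hr; auto).
  pose proof (PSeries_correct _ _ (CV_radius_inside _ _ Hk)) as P. apply is_pseries_R in P.
  eapply is_series_ext; [|exact P].
  intros j. rewrite H0. unfold PS_derive_n. rewrite (Nat.add_comm j k).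
  pose proof (INR_fact_neq_0 j). change (INR (fact (k + j)) / INR (fact j) * e (k + j)%nat * h ^ j = e (k + j)%nat * INR (fact (k + j)) * h ^ j / INR (fact j)). field. auto.
Qed.

Lemma deriv_cont (G : R -> R) w0 rho e : 0 < rho ->
  (forall w, Rabs (w - w0) < rho -> is_pseries e (w - w0) (G w)) ->
  forall k, continuity_pt (Derive_n G k) w0.
Proof.
  intros Hrho He k.
  assert (Hr : forall y, Rabs y < rho -> Rbar_lt (Rabs y) (CV_radius e)).
  { intros y Hy. apply (radius_gt e rho); auto. intros y' Hy'. exists (G (y' + w0)).
    pose proof (He (y' + w0)) as HH. replace (y' + w0 - w0) with y' in HH by ring. apply HH. lra. }
  apply (continuity_pt_locally_ext (fun t => PSeries (PS_derive_n k e) (t - w0)) _ rho); auto.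
  - intros y Hy. unfold Rdist in Hy. rewrite <- (deriv_local G w0 rho e Hrho He k (y - w0) Hy).
    f_equal. ring.
  - apply (continuity_pt_comp (fun t => t - w0) (PSeries (PS_derive_n k e))).
    + apply continuity_pt_minus; [apply continuity_pt_id| apply continuity_pt_const; intros ? ?; auto].
    + apply PSeries_continuity. rewrite CV_radius_derive_n. apply Hr.
      replace (w0 - w0) with 0 by ring. rewrite Rabs_R0. auto.
Qed.

Definition Kd (s c : R) (k : nat) (w : R) : R :=
  poch s k * (1 - c) ^ k * Rpower (1 - (1 - c) * w) (- (s + INR k)).

Lemma Kd_taylor s c k w0 h : 0 < s -> 0 < c < 1 -> 0 <= w0 -> 0 <= h -> w0 + h < 1 ->
  is_series (fun j => Kd s c (k + j) w0 * h ^ j / INR (fact j)) (Kd s c k (w0 + h)).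
Proof.
  intros Hs Hc Hw0 Hh Hwh.
  set (B0 := 1 - (1 - c) * w0).
  assert (HB0 : 0 < B0) by (unfold B0; nra).
  set (u := (1 - c) * h / B0).
  assert (Hu : Rabs u < 1).
  { unfold u. rewrite Rabs_pos_eq by (apply Rmult_le_pos; [nra| left; apply Rinv_0_lt_compat; lra]).
    apply Rmult_lt_reg_r with B0; auto. unfold Rdiv. rewrite Rmult_assoc, Rinv_l by lra. unfold B0. nra. }
  assert (Hsk : 0 < s + INR k) by (pose proof (pos_INR k); lra).
  pose proof (binom_series (s + INR k) u Hsk Hu) as B. apply is_pseries_R in B.
  set (K0 := poch s k * (1 - c) ^ k * Rpower B0 (- (s + INR k))).
  assert (E : Kd s c k (w0 + h) = K0 * Rpower (1 - u) (- (s + INR k))).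
  { unfold Kd, K0. rewrite (Rmult_assoc (poch s k * (1 - c) ^ k) (Rpower B0 _)).
    rewrite Rpower_mult_distr by (auto || (apply Rabs_def2 in Hu; lra)).
    f_equal. f_equal. unfold u, B0. field. unfold B0 in HB0. lra. }
  assert (T : forall j, K0 * (bco (s + INR k) j * u ^ j) = Kd s c (k + j) w0 * h ^ j / INR (fact j)).
  { intros j. unfold Kd, K0, bco, u.
    rewrite poch_add, plus_INR.
    replace (- (s + (INR k + INR j))) with (- ((s + INR k) + INR j)) by ring.
    fold B0. rewrite (Rpower_neg_plus B0 (s + INR k) j) by auto.
    rewrite pow_add. unfold Rdiv. rewrite !Rpow_mult_distr, pow_inv.
    field. split; [apply INR_fact_neq_0| apply pow_nonzero; lra]. }
  rewrite E. eapply is_series_ext; [intros j; apply T|apply is_series_Rmult_l; exact B].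
Qed.

Lemma Kd_cont s c k w : 0 < c < 1 -> w < 1 -> continuity_pt (Kd s c k) w.
Proof.
  intros Hc Hw. apply continuity_pt_filterlim.
  apply (@ex_derive_continuous R_AbsRing R_NormedModule (Kd s c k) w).
  unfold Kd, Rpower. auto_derive. nra.
Qed.

Definition Dd (G : R -> R) s c k w := Derive_n G k w - Kd s c k w.

Definition Qp (G : R -> R) s c (d0 : R) (w : R) : Prop :=
  (forall k, 0 <= Dd G s c k w) /\ d0 <= Dd G s c 2 w /\ d0 * w <= Dd G s c 1 w /\
  d0 * (w * w) / 2 <= Dd G s c 0 w.

Lemma propagate (G : R -> R) s c d0 w0 rho e :
  0 < s -> 0 < c < 1 -> 0 < rho ->
  (forall w, Rabs (w - w0) < rho -> is_pseries e (w - w0) (G w)) ->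
  0 <= w0 -> Qp G s c d0 w0 -> forall h, 0 <= h < rho -> w0 + h < 1 -> Qp G s c d0 (w0 + h).
Proof.
  intros Hs Hc Hrho He Hw0 [Q1 [Q2 [Q3 Q4]]] h Hh Hwh.
  assert (HS : forall k, is_series (fun j => Dd G s c (k + j) w0 * h ^ j / INR (fact j)) (Dd G s c k (w0 + h))).
  { intros k. pose proof (deriv_taylor G w0 rho e Hrho He k h ltac:(rewrite Rabs_pos_eq; lra)) as T1.
    pose proof (Kd_taylor s c k w0 h Hs Hc Hw0 (proj1 Hh) Hwh) as T2.
    pose proof (is_series_minus _ _ _ _ T1 T2) as T3.
    eapply is_series_ext; [|exact T3]. intros j. unfold Dd. simpl. unfold plus, opp; simpl. field.
    apply INR_fact_neq_0. }
  assert (Hnn : forall k j, 0 <= Dd G s c (k + j) w0 * h ^ j / INR (fact j)).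
  { intros k j. apply Rmult_le_pos; [apply Rmult_le_pos; [apply Q1| apply pow_le; lra]|].
    left. apply Rinv_0_lt_compat, INR_fact_lt_0. }
  assert (P : forall k N, sum_f_R0 (fun j => Dd G s c (k + j) w0 * h ^ j / INR (fact j)) N <= Dd G s c k (w0 + h)).
  { intros k N. apply partial_le_lim; auto. }
  split; [|split; [|split]].
  - intros k. eapply Rle_trans; [|apply (P k 0%nat)]. apply Hnn.
  - eapply Rle_trans; [|apply (P 2%nat 0%nat)]. simpl. lra.
  - eapply Rle_trans; [|apply (P 1%nat 1%nat)]. simpl. nra.
  - eapply Rle_trans; [|apply (P 0%nat 2%nat)]. simpl. nra.
Qed.

Lemma cont_ge (f : R -> R) x eps : 0 < eps -> continuity_pt f x ->
  (forall v, x - eps < v < x -> 0 <= f v) -> 0 <= f x.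
Proof.
  intros He Hc H. destruct (Rle_or_lt 0 (f x)) as [|Hlt]; auto.
  destruct (Hc (- f x / 2)) as [alp [Halp Hal]]; [lra|].
  set (v := x - Rmin alp eps / 2).
  assert (Hm : 0 < Rmin alp eps) by (apply Rmin_glb_lt; lra).
  assert (Hv : x - eps < v < x).
  { unfold v. split; [|lra]. pose proof (Rmin_r alp eps). lra. }
  specialize (H v Hv).
  assert (Hd : Rabs (v - x) < alp).
  { unfold v. rewrite Rabs_left by lra. pose proof (Rmin_l alp eps). lra. }
  assert (Hxv : x <> v) by lra.
  specialize (Hal v (conj (conj I Hxv) Hd)). simpl in Hal. unfold R_dist, Rdist in Hal.
  apply Rabs_def2 in Hal. lra.
Qed.

Lemma cont_minus (f g : R -> R) x : continuity_pt f x -> continuity_pt g x ->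
  continuity_pt (fun y => f y - g y) x.
Proof. intros; apply continuity_pt_minus; auto. Qed.

Lemma cont_poly (a0 a1 a2 : R) x : continuity_pt (fun y => a0 + a1 * y + a2 * (y * y)) x.
Proof.
  apply continuity_pt_filterlim.
  apply (@ex_derive_continuous R_AbsRing R_NormedModule (fun y => a0 + a1 * y + a2 * (y * y)) x).
  auto_derive. auto.
Qed.

Lemma closure_Q (G : R -> R) s c d0 s0 rho e :
  0 < c < 1 -> 0 < rho -> 0 < s0 < 1 ->
  (forall w, Rabs (w - s0) < rho -> is_pseries e (w - s0) (G w)) ->
  (forall v, 0 <= v < s0 -> Qp G s c d0 v) -> Qp G s c d0 s0.
Proof.
  intros Hc Hrho Hs0 He HQ.
  assert (HD : forall k, continuity_pt (Dd G s c k) s0).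
  { intros k. apply cont_minus; [apply (deriv_cont G s0 rho e); auto| apply Kd_cont; lra]. }
  assert (HQ' : forall v, s0 - s0 < v < s0 -> Qp G s c d0 v) by (intros; apply HQ; lra).
  split; [|split; [|split]].
  - intros k. apply (cont_ge (Dd G s c k) s0 s0); [lra| apply HD|].
    intros v Hv. apply (HQ' v Hv).
  - assert (0 <= Dd G s c 2 s0 - d0); [|lra].
    apply (cont_ge (fun v => Dd G s c 2 v - d0) s0 s0); [lra| |].
    + apply cont_minus; [apply HD| apply continuity_pt_const; intros ? ?; auto].
    + intros v Hv. destruct (HQ' v Hv) as [_ [H _]]. lra.
  - assert (0 <= Dd G s c 1 s0 - (0 + d0 * s0 + 0 * (s0 * s0))); [|lra].
    apply (cont_ge (fun v => Dd G s c 1 v - (0 + d0 * v + 0 * (v * v))) s0 s0); [lra| |].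
    + apply cont_minus; [apply HD| apply cont_poly].
    + intros v Hv. destruct (HQ' v Hv) as [_ [_ [H _]]]. lra.
  - assert (0 <= Dd G s c 0 s0 - (0 + 0 * s0 + d0 / 2 * (s0 * s0))); [|lra].
    apply (cont_ge (fun v => Dd G s c 0 v - (0 + 0 * v + d0 / 2 * (v * v))) s0 s0); [lra| |].
    + apply cont_minus; [apply HD| apply cont_poly].
    + intros v Hv. destruct (HQ' v Hv) as [_ [_ [_ H]]]. lra.
Qed.

Lemma continuation (G : R -> R) s c d0 :
  0 < s -> 0 < c < 1 ->
  (forall w0, 0 <= w0 < 1 -> analytic_at G w0) ->
  Qp G s c d0 0 -> forall w, 0 <= w < 1 -> Qp G s c d0 w.
Proof.
  intros Hs Hc Han HQ0.
  set (E := fun x => 0 <= x < 1 /\ forall v, 0 <= v <= x -> Qp G s c d0 v).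
  assert (Hb : bound E) by (exists 1; intros x [Hx _]; lra).
  assert (Hne : exists x, E x).
  { exists 0. split; [lra|]. intros v Hv. replace v with 0 by lra. auto. }
  destruct (completeness E Hb Hne) as [m [Hub Hlub]].
  assert (Hm0 : 0 <= m) by (apply Hub; destruct Hne as [x Hx]; unfold E; split; [lra|]; intros v Hv; replace v with 0 by lra; auto).
  assert (Hbelow : forall v, 0 <= v < m -> Qp G s c d0 v).
  { intros v Hv. destruct (Classical_Prop.classic (exists x, E x /\ v < x)) as [[x [[Hx1 Hx2] Hx3]]|Hn].
    - apply Hx2; lra.
    - exfalso. assert (m <= v); [|lra]. apply Hlub. intros x Hx.
      destruct (Rle_or_lt x v) as [|Hlt]; auto. exfalso; apply Hn; eauto. }
  assert (Hm1 : 1 <= m).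
  { destruct (Rle_or_lt 1 m) as [|Hlt]; auto. exfalso.
    assert (HQm : Qp G s c d0 m).
    { destruct (Req_dec m 0) as [->|Hne0]; auto.
      destruct (Han m ltac:(lra)) as [rho [Hrho [e He]]].
      apply (closure_Q G s c d0 m rho e); auto; lra. }
    destruct (Han m ltac:(lra)) as [rho [Hrho [e He]]].
    set (h := Rmin rho (1 - m) / 2).
    assert (Hh : 0 < h) by (unfold h; assert (0 < Rmin rho (1 - m)) by (apply Rmin_glb_lt; lra); lra).
    assert (Hh1 : h < rho) by (unfold h; pose proof (Rmin_l rho (1 - m)); lra).
    assert (Hh2 : m + h < 1) by (unfold h; pose proof (Rmin_r rho (1 - m)); lra).
    assert (HE : E (m + h)).
    { split; [lra|]. intros v Hv. destruct (Rlt_or_le v m) as [Hvm|Hvm].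
      - apply Hbelow; lra.
      - replace v with (m + (v - m)) by ring.
        apply (propagate G s c d0 m rho e); auto; lra. }
    specialize (Hub _ HE). lra. }
  intros w Hw. apply Hbelow. lra.
Qed.

Lemma C_n_n' n : Binomial.C n n = 1.
Proof. unfold Binomial.C. rewrite Nat.sub_diag. simpl. field. apply INR_fact_neq_0. Qed.

Lemma C_n_0' n : Binomial.C n 0 = 1.
Proof. unfold Binomial.C. rewrite Nat.sub_0_r. simpl. field. apply INR_fact_neq_0. Qed.

Lemma bn_C k : forall n, (n <= k)%nat -> bn k n = Binomial.C k n.
Proof.
  induction k; intros n Hn.
  - replace n with 0%nat by lia. simpl. rewrite C_n_0'. reflexivity.
  - destruct n as [|n'].
    + simpl. rewrite C_n_0'. reflexivity.
    + simpl. destruct (Nat.eq_dec n' k) as [->|Hne].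
      * rewrite (bn_gt k (S k)) by lia. rewrite IHk by lia. rewrite !C_n_n'. ring.
      * rewrite !IHk by lia. apply pascal. lia.
Qed.

Lemma prodR_ext q f g : (forall i, (i < q)%nat -> f i = g i) -> prodR q f = prodR q g.
Proof. induction q; intros H; simpl; auto. rewrite IHq, H; auto; intros; apply H; lia. Qed.

Lemma prodR_pos q f : (forall i, (i < q)%nat -> 0 < f i) -> 0 < prodR q f.
Proof.
  induction q; intros H; simpl; [lra|]. apply Rmult_lt_0_compat; [apply IHq; intros; apply H; lia| apply H; lia].
Qed.

Lemma prodR_le q f g : (forall i, (i < q)%nat -> 0 <= f i <= g i) -> prodR q f <= prodR q g.
Proof.
  induction q; intros H; simpl; [lra|].
  assert (0 <= prodR q f).
  { clear IHq. induction q; simpl; [lra|]. apply Rmult_le_pos; [apply IHq; intros; apply H; lia| apply (H q); lia]. }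
  destruct (H q ltac:(lia)).
  apply Rmult_le_compat; auto; try lra.
Qed.

Lemma prodR_lt q f g : (1 <= q)%nat -> (forall i, (i < q)%nat -> 0 < f i < g i) -> prodR q f < prodR q g.
Proof.
  intros Hq H. destruct q as [|q]; [lia|]. simpl.
  assert (H1 : prodR q f <= prodR q g) by (apply prodR_le; intros i Hi; specialize (H i ltac:(lia)); lra).
  assert (H2 : 0 < prodR q f) by (apply prodR_pos; intros i Hi; apply H; lia).
  destruct (H q ltac:(lia)). nra.
Qed.

Lemma prodR_mult q f g : prodR q (fun i => f i * g i) = prodR q f * prodR q g.
Proof. induction q; simpl; [ring|]. rewrite IHq. ring. Qed.

Lemma prodR_pow q f n : prodR q (fun i => f i ^ n) = prodR q f ^ n.
Proof. induction q; simpl; [rewrite pow1; ring|]. rewrite IHq, Rpow_mult_distr. ring. Qed.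

Lemma prodR_one q : prodR q (fun _ => 1) = 1.
Proof. induction q; simpl; [ring|]. rewrite IHq; ring. Qed.

Lemma series_strict (u v : nat -> R) lu lv :
  is_series u lu -> is_series v lv -> (forall n, u n <= v n) -> u 2%nat < v 2%nat -> lu < lv.
Proof.
  intros Hu Hv Hle Hlt.
  pose proof (is_series_minus _ _ _ _ Hv Hu) as H.
  assert (H' : is_series (fun n => v n - u n) (lv - lu)).
  { eapply is_series_ext; [|exact H]. intros n. reflexivity. }
  pose proof (partial_le_lim (fun n => v n - u n) (lv - lu) 2 ltac:(intros n; specialize (Hle n); lra) H') as P.
  simpl in P. pose proof (Hle 0%nat). pose proof (Hle 1%nat). lra.
Qed.

Lemma deriv_center (G : R -> R) w0 rho e : 0 < rho ->
  (forall w, Rabs (w - w0) < rho -> is_pseries e (w - w0) (G w)) ->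
  forall k, Derive_n G k w0 = e k * INR (fact k).
Proof.
  intros Hrho He k.
  assert (Hr : Rbar_lt (Rabs 0) (CV_radius e)).
  { apply (radius_gt e rho); [|rewrite Rabs_R0; lra]. intros y' Hy'. exists (G (y' + w0)).
    pose proof (He (y' + w0)) as HH. replace (y' + w0 - w0) with y' in HH by ring. apply HH. lra. }
  pose proof (deriv_local G w0 rho e Hrho He k 0 ltac:(rewrite Rabs_R0; lra)) as E.
  rewrite Rplus_0_r in E. rewrite E.
  rewrite <- (Derive_n_PSeries k e 0) by auto.
  rewrite Rabs_R0 in Hr. apply Derive_n_coef. exact Hr.
Qed.

Theorem theorem3 (q : nat) (a b : nat -> R) (sigma : R) (F : R -> R) :
  (1 <= q)%nat ->
  (forall i, (i < q)%nat -> 0 < a i /\ a i < b i) ->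
  1 <= sigma ->
  is_hyp_pFq q sigma a b F ->
  forall x : R, -1 < x -> x <> 0 ->
    / Rpower (1 + x * prodR q (fun i => a i / b i)) sigma < F (- x).
Proof.
  intros Hq Hab Hs [Han Hser] x Hx Hx0.
  set (m := fun k => prodR q (fun i => poch (a i) k / poch (b i) k)).
  set (c := prodR q (fun i => a i / b i)).
  assert (Hab2 : forall i, (i < q)%nat -> 0 < a i / b i < 1).
  { intros i Hi. destruct (Hab i Hi). split; [apply Rdiv_lt_0_compat; lra|].
    apply (Rmult_lt_reg_r (b i)); [lra|]. unfold Rdiv; rewrite Rmult_assoc, Rinv_l; lra. }
  assert (Hc : 0 < c < 1).
  { split; [apply prodR_pos; intros; apply Hab2; auto|].
    rewrite <- (prodR_one q). apply prodR_lt; auto. }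
  assert (Hcm1 : m 1%nat = c).
  { unfold m, c. apply prodR_ext. intros i Hi. rewrite !poch_1. reflexivity. }
  assert (Hm0 : m 0%nat = 1).
  { unfold m. rewrite <- (prodR_one q). apply prodR_ext. intros i Hi. simpl. field. }
  assert (Hm2 : c ^ 2 < m 2%nat).
  { unfold c. rewrite <- prodR_pow. unfold m. apply prodR_lt; auto.
    intros i Hi. destruct (Hab i Hi) as [Ha Hb]. split; [apply pow_lt; apply Hab2; auto|].
    simpl. unfold Rdiv. rewrite !Rmult_1_l, !Rmult_1_r, !Rplus_0_r.
    apply Rminus_lt_0.
    replace ((a i * (a i + 1)) * / (b i * (b i + 1)) - (a i * / b i) * (a i * / b i))
      with (a i * (b i - a i) / (b i * b i * (b i + 1))) by (field; lra).
    apply Rdiv_lt_0_compat; [nra|]. apply Rmult_lt_0_compat; nra. }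
  assert (Hmn : forall n, c ^ n <= m n).
  { intros n. unfold c. rewrite <- prodR_pow. unfold m. apply prodR_le.
    intros i Hi. destruct (Hab i Hi) as [Ha Hb]. split; [apply pow_le; apply Rlt_le, Hab2; auto|].
    pose proof (pba_ge (b i - a i) (b i) ltac:(lra) ltac:(lra) n) as P.
    replace (b i - (b i - a i)) with (a i) in P by ring. exact P. }
  assert (Hmpos : forall n, 0 <= m n).
  { intros n. unfold m. apply Rlt_le, prodR_pos. intros i Hi. destruct (Hab i Hi).
    apply Rdiv_lt_0_compat; apply poch_pos; lra. }
  assert (Hsig : 0 < sigma) by lra.
  destruct (Rlt_or_le x 0) as [Hneg|Hpos].
  -
    set (z := - x).
    assert (Hz : 0 < z < 1) by (unfold z; lra).
    pose proof (Hser z ltac:(lra)) as S1. apply is_pseries_R in S1.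
    assert (Hcz : Rabs (c * z) < 1) by (rewrite Rabs_pos_eq by nra; nra).
    pose proof (binom_series sigma (c * z) Hsig Hcz) as S2. apply is_pseries_R in S2.
    replace (/ Rpower (1 + x * c) sigma) with (Rpower (1 - c * z) (- sigma)).
    2:{ rewrite Rpower_Ropp. f_equal. f_equal. unfold z. ring. }
    apply (series_strict _ _ _ _ S2 S1).
    + intros n. unfold bco, hyp_coef. fold (m n). rewrite Rpow_mult_distr.
      assert (0 < poch sigma n) by (apply poch_pos; auto).
      assert (0 < INR (fact n)) by apply INR_fact_lt_0.
      assert (0 <= z ^ n) by (apply pow_le; lra).
      assert (0 < / INR (fact n)) by (apply Rinv_0_lt_compat; auto).
      specialize (Hmn n). unfold Rdiv.
      replace (poch sigma n * / INR (fact n) * (c ^ n * z ^ n)) with ((poch sigma n * / INR (fact n) * z ^ n) * c ^ n) by ring.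
      replace (poch sigma n * m n * / INR (fact n) * z ^ n) with ((poch sigma n * / INR (fact n) * z ^ n) * m n) by ring.
      apply Rmult_le_compat_l; auto. apply Rmult_le_pos; [|lra]. apply Rmult_le_pos; lra.
    + unfold bco, hyp_coef. fold (m 2%nat). rewrite Rpow_mult_distr.
      assert (0 < poch sigma 2) by (apply poch_pos; auto).
      assert (0 < z ^ 2) by (apply pow_lt; lra).
      simpl (INR (fact 2)). unfold Rdiv.
      set (P := poch sigma 2 * / (1 + 1) * z ^ 2).
      assert (0 < P) by (unfold P; apply Rmult_lt_0_compat; [apply Rmult_lt_0_compat; [lra| apply Rinv_0_lt_compat; lra]|lra]).
      replace (poch sigma 2 * / (1 + 1) * (c ^ 2 * z ^ 2)) with (P * c ^ 2) by (unfold P; ring).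
      replace (poch sigma 2 * m 2%nat * / (1 + 1) * z ^ 2) with (P * m 2%nat) by (unfold P; ring).
      apply Rmult_lt_compat_l; auto.
  - assert (Hxp : 0 < x) by lra.
    set (G := Hf sigma F).
    assert (HanG : forall w0, 0 <= w0 < 1 -> analytic_at G w0).
    { intros w0 Hw0. set (z0 := w0 / (w0 - 1)).
      assert (Hz0 : z0 < 1).
      { unfold z0. apply Rle_lt_trans with 0; [|lra]. unfold Rdiv.
        apply Rmult_le_0_l; [lra| left; apply Rinv_lt_0_compat; lra]. }
      destruct (Han z0 Hz0) as [r [Hr [cF HcF]]].
      destruct (transform sigma F z0 r cF Hsig Hz0 Hr HcF) as [rho [Hrho Hexp]].
      assert (Ec : z0 / (z0 - 1) = w0) by (unfold z0; field; split; lra).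
      rewrite Ec in Hexp. exists rho. split; auto. eexists. exact Hexp. }
    assert (HF0 : forall z, Rabs (z - 0) < 1 -> is_pseries (hyp_coef q sigma a b) (z - 0) (F z)).
    { intros z Hz. rewrite Rminus_0_r in *. apply Hser. apply Rabs_def2 in Hz. lra. }
    destruct (transform sigma F 0 1 _ Hsig ltac:(lra) ltac:(lra) HF0) as [rho0 [Hrho0 Hexp0]].
    replace (0 / (0 - 1)) with 0 in Hexp0 by (unfold Rdiv; ring).
    replace (1 - 0) with 1 in Hexp0 by ring.
    assert (Hder0 : forall k, Derive_n G k 0 = poch sigma k * mu m 0 k).
    { intros k. rewrite (deriv_center G 0 rho0 _ Hrho0 Hexp0 k).
      unfold ecoef. rewrite Rpower_base1, Rmult_1_l.
      rewrite mu_sum. rewrite Rmult_comm, scal_sum, scal_sum.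
      apply sum_eq. intros n Hn. simpl (0 + n)%nat.
      rewrite pow1. unfold hyp_coef. fold (m n). unfold bco.
      rewrite bn_C by auto. unfold Binomial.C.
      replace (poch sigma k) with (poch sigma n * poch (sigma + INR n) (k - n)).
      2:{ rewrite <- poch_add. f_equal. lia. }
      pose proof (INR_fact_neq_0 n). pose proof (INR_fact_neq_0 (k - n)). pose proof (INR_fact_neq_0 k).
      field. auto. }
    assert (HKd0 : forall k, Kd sigma c k 0 = poch sigma k * (1 - c) ^ k).
    { intros k. unfold Kd. rewrite Rmult_0_r, Rminus_0_r, Rpower_base1. ring. }
    assert (Hjen : forall k, (1 - c) ^ k <= mu m 0 k).
    { intros k. destruct (moments_claim a b q Hab 1 ltac:(lra)) as [_ Jen].
      specialize (Jen k).
      assert (E1 : forall kk, sq a b q 1 kk = m kk) by (intros; unfold sq, m; rewrite pow1; ring).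
      rewrite E1, Hcm1 in Jen. rewrite (mu_ext _ _ E1) in Jen. exact Jen. }
    set (d0 := poch sigma 2 * (mu m 0 2 - (1 - c) ^ 2)).
    assert (Hd0 : 0 < d0).
    { unfold d0. apply Rmult_lt_0_compat; [apply poch_pos; auto|].
      simpl mu. rewrite Hm0, Hcm1. simpl pow in Hm2 |- *. lra. }
    assert (HQ0 : Qp G sigma c d0 0).
    { unfold Qp, Dd. rewrite !Hder0, !HKd0.
      assert (Hk : forall k, 0 <= poch sigma k * mu m 0 k - poch sigma k * (1 - c) ^ k).
      { intros k. pose proof (Hjen k). pose proof (poch_pos sigma k Hsig). nra. }
      split. { intros k. rewrite Hder0, HKd0. apply Hk. }
      split. { unfold d0. right; ring. }
      split.
      - rewrite Rmult_0_r. apply Hk.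
      - rewrite Rmult_0_r, Rmult_0_r. unfold Rdiv. rewrite Rmult_0_l. apply Hk. }
    set (w := x / (1 + x)).
    assert (Hw : 0 < w < 1).
    { unfold w. split; [apply Rdiv_lt_0_compat; lra|].
      apply (Rmult_lt_reg_r (1 + x)); [lra|]. unfold Rdiv. rewrite Rmult_assoc, Rinv_l; lra. }
    destruct (continuation G sigma c d0 Hsig Hc HanG HQ0 w ltac:(lra)) as [_ [_ [_ Q0]]].
    assert (HGw : Kd sigma c 0 w < G w).
    { unfold Dd in Q0. simpl Derive_n in Q0. assert (0 < d0 * (w * w) / 2) by (apply Rdiv_lt_0_compat; [apply Rmult_lt_0_compat; nra|lra]). lra. }
    unfold G, Hf, Kd in HGw.
    replace (w / (w - 1)) with (- x) in HGw by (unfold w; field; lra).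
    simpl in HGw. rewrite Rplus_0_r, Rmult_1_l, Rmult_1_l in HGw.
    assert (H1w : 0 < 1 - w) by lra.
    assert (Hpw : 0 < Rpower (1 - w) sigma) by (unfold Rpower; apply exp_pos).
    assert (E1 : Rpower (1 - w) (- sigma) * Rpower (1 - w) sigma = 1).
    { rewrite <- Rpower_plus. replace (- sigma + sigma) with 0 by ring. apply Rpower_O. auto. }
    assert (E2 : / Rpower (1 + x * c) sigma = Rpower (1 - (1 - c) * w) (- sigma) * Rpower (1 - w) sigma).
    { replace (1 - (1 - c) * w) with ((1 + x * c) * (1 - w)) by (unfold w; field; lra).
      rewrite <- Rpower_mult_distr by (nra || lra). rewrite Rmult_assoc, E1, Rmult_1_r.
      rewrite Rpower_Ropp. reflexivity. }
    rewrite E2.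
    replace (F (- x)) with ((Rpower (1 - w) (- sigma) * F (- x)) * Rpower (1 - w) sigma).
    2:{ rewrite Rmult_comm, <- Rmult_assoc, (Rmult_comm (Rpower (1 - w) sigma)), E1. ring. }
    apply Rmult_lt_compat_r; auto.
Qed.
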